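(* Let $\alpha\in(0,1)$. Assume the setting described in the context, and assume: (i) (concentration over calibration data) there exist $\varepsilon_{\mathrm{cal}}\in(0,1)$ and $\delta_{\mathrm{cal}}\in(0,1)$ such that for every measurable $q:(\mathcal{X}\times\mathcal{Y})^{n_{\mathrm{train}}}\to\mathbb{R}$, \[\mathbb{P}\left[\left|\frac{1}{n_{\mathrm{cal}}}\sum_{i\in I_{\mathrm{cal}}}\mathbf{1}\{\widehat{s}_{\mathrm{train}}(X_i,Y_i)\le q_{\mathrm{train}}\}-P_{q,\mathrm{train}}\right|\le\varepsilon_{\mathrm{cal}}\right]\ge 1-\delta_{\mathrm{cal}};\] (ii) (marginal decoupling of test data) there exists $\varepsilon_{\mathrm{test}}$ such that for every measurable $q:(\mathcal{X}\times\mathcal{Y})^{n_{\mathrm{train}}}\to\mathbb{R}$ and every $i\in I_{\mathrm{test}}$, \[\left|\mathbb{P}[\widehat{s}_{\mathrm{train}}(X_i,Y_i)\le q_{\mathrm{train}}]-\mathbb{E}[P_{q,\mathrm{train}}]\right|\le\varepsilon_{\mathrm{test}}.\] Then for all $i\in I_{\mathrm{test}}$, \[\mathbb{P}[Y_i\in C_{1-\alpha}(X_i)]\ge 1-\alpha-\varepsilon_{\mathrm{cal}}-\delta_{\mathrm{cal}}-\varepsilon_{\mathrm{test}}.\] Additionally, if $\widehat{s}_{\mathrm{train}}(X_*,Y_* )$ almost surely has a continuous distribution conditionally on the training data $(X_i,Y_i)_{i\in I_{\mathrm{train}}}$, then for all $i\in I_{\mathrm{test}}$, \[\left|\mathbb{P}[Y_i\in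 C_{1-\alpha}(X_i)]-(1-\alpha)\right|\le\varepsilon_{\mathrm{cal}}+\delta_{\mathrm{cal}}+\varepsilon_{\mathrm{test}}.\]
   Context: Let $\mathcal{X},\mathcal{Y}$ be measurable spaces. The sample $(X_i,Y_i)_{i=1}^n$ consists of random pairs in $\mathcal{X}\times\mathcal{Y}$, and $(X_*,Y_* )$ is an additional random pair in $\mathcal{X}\times\mathcal{Y}$, independent of the sample, with $(X_i,Y_i)\sim(X_*,Y_* )$ for all $i\in\{1,\dots,n\}$. Write $n=n_{\mathrm{train}}+n_{\mathrm{cal}}+n_{\mathrm{test}}$ with positive integers, and set $I_{\mathrm{train}}=\{1,\dots,n_{\mathrm{train}}\}$, $I_{\mathrm{cal}}=\{n_{\mathrm{train}}+1,\dots,n_{\mathrm{train}}+n_{\mathrm{cal}}\}$, $I_{\mathrm{test}}=\{n_{\mathrm{train}}+n_{\mathrm{cal}}+1,\dots,n\}$. Let $s:(\mathcal{X}\times\mathcal{Y})^{n_{\mathrm{train}}+1}\to\mathbb{R}$ be any (measurable) function and define the trained conformity score $\widehat{s}_{\mathrm{train}}(x,y)=s((X_i,Y_i)_{i\in I_{\mathrm{train}}},(x,y))$. For $\phi\in[0,1)$, the empirical quantile is $\widehat{q}_{\phi,\mathrm{cal}}=\inf\{t\in\mathbb{R}:\frac{1}{n_{\mathrm{cal}}}\sum_{i\in I_{\mathrm{cal}}}\mathbf{1}\{\widehat{s}_{\mathrm{train}}(X_i,Y_i)\le t\}\ge\phi\}$, and the predictive set is $C_\phi(x)=\{y\in\mathcal{Y}:\widehat{s}_{\mathrm{train}}(x,y)\le\widehat{q}_{\phi,\mathrm{cal}}\}$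 for $x\in\mathcal{X}$. For a measurable $q:(\mathcal{X}\times\mathcal{Y})^{n_{\mathrm{train}}}\to\mathbb{R}$, write $q_{\mathrm{train}}=q((X_i,Y_i)_{i\in I_{\mathrm{train}}})$ and $P_{q,\mathrm{train}}=\mathbb{P}[\widehat{s}_{\mathrm{train}}(X_*,Y_* )\le q_{\mathrm{train}}\mid (X_i,Y_i)_{i\in I_{\mathrm{train}}}]$. *)

(* Defs.v *)
From HB Require Import structures.
From mathcomp Require Import all_boot all_order all_algebra.
From mathcomp Require Import all_classical all_reals all_analysis.


Unset Strict Implicit.
Unset Printing Implicit Defensive.

Import Order.TTheory GRing.Theory Num.Theory.
Import numFieldNormedType.Exports.
Local Open Scope classical_set_scope.
Local Open Scope ring_scope.

(* Random pairs are indexed 1-based by nat, as in the paper: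
   (Xs i, Ys i), i = 1..n.  Index sets:
   I_train = {1..ntrain}, I_cal = {ntrain+1..ntrain+ncal},
   I_test = {ntrain+ncal+1..n}. *)

Definition in_Itrain (ntrain i : nat) : bool := (1 <= i <= ntrain)%N.
Definition in_Ical (ntrain ncal i : nat) : bool :=
  (ntrain < i <= ntrain + ncal)%N.
Definition in_Itest (ntrain ncal ntest i : nat) : bool :=
  (ntrain + ncal < i <= ntrain + ncal + ntest)%N.

Definition sample {Om X Y : Type} (n : nat) (Xs : nat -> Om -> X)
  (Ys : nat -> Om -> Y) (w : Om) : n.-tuple (X * Y) :=
  [tuple (Xs (val i).+1 w, Ys (val i).+1 w) | i < n].

Definition train_data {Om X Y : Type} (ntrain : nat) (Xs : nat -> Om -> X)
  (Ys : nat -> Om -> Y) (w : Om) : ntrain.-tuple (X * Y) :=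
  sample ntrain Xs Ys w.

Definition strain {X Y : Type} {R : Type} {ntrain : nat}
  (s : ntrain.+1.-tuple (X * Y) -> R) (t : ntrain.-tuple (X * Y))
  (z : X * Y) : R :=
  s [tuple of rcons t z].

Definition same_law {d d' : measure_display} {Om : measurableType d}
  {T : measurableType d'} {R : realType} (P : probability Om R)
  (f g : Om -> T) : Prop :=
  forall A : set T, measurable A -> P (f @^-1` A) = P (g @^-1` A).

Definition indep_rv {d d1 d2 : measure_display} {Om : measurableType d}
  {T1 : measurableType d1} {T2 : measurableType d2} {R : realType}
  (P : probability Om R) (f : Om -> T1) (g : Om -> T2) : Prop :=
  forall (A : set T1) (B : set T2), measurable A -> measurable B ->
    P (f @^-1` A `&` g @^-1` B) = (P (f @^-1` A) * P (g @^-1` B))%E.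

(* P_{q,train}(w) = P[ s_train(X_star,Y_star) <= q_train | train ](w).
   Since (X_star,Y_star) is independent of the sample (hypothesis of the
   theorem), the (regular version of the) conditional probability given the
   training data is obtained by freezing the training data at its value
   train(w) and integrating over (X_star,Y_star). *)
Definition Pq_train {d d1 d2 : measure_display} {Om : measurableType d}
  {X : measurableType d1} {Y : measurableType d2} {R : realType}
  (P : probability Om R) (ntrain : nat) (Xs : nat -> Om -> X)
  (Ys : nat -> Om -> Y) (XS : Om -> X) (YS : Om -> Y)
  (s : ntrain.+1.-tuple (X * Y) -> R) (q : ntrain.-tuple (X * Y) -> R)
  (w : Om) : R :=
  fine (P [set w' | strain s (train_data ntrain Xs Ys w) (XS w', YS w')
                    <= q (train_data ntrain Xs Ys w)]).

Definition cond_cdf {d d1 d2 : measure_display} {Om : measurableType d}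
  {X : measurableType d1} {Y : measurableType d2} {R : realType}
  (P : probability Om R) (ntrain : nat) (Xs : nat -> Om -> X)
  (Ys : nat -> Om -> Y) (XS : Om -> X) (YS : Om -> Y)
  (s : ntrain.+1.-tuple (X * Y) -> R) (w : Om) (t : R) : R :=
  fine (P [set w' | strain s (train_data ntrain Xs Ys w) (XS w', YS w') <= t]).

Definition emp_cdf_cal {Om X Y : Type} {R : realType} (ntrain ncal : nat)
  (Xs : nat -> Om -> X) (Ys : nat -> Om -> Y)
  (s : ntrain.+1.-tuple (X * Y) -> R) (w : Om) (t : R) : R :=
  (ncal%:R)^-1 * \sum_(ntrain.+1 <= i < (ntrain + ncal).+1)
     (nat_of_bool (strain s (train_data ntrain Xs Ys w) (Xs i w, Ys i w) <= t))%:R.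

Definition qhat_cal {Om X Y : Type} {R : realType} (ntrain ncal : nat)
  (Xs : nat -> Om -> X) (Ys : nat -> Om -> Y)
  (s : ntrain.+1.-tuple (X * Y) -> R) (phi : R) (w : Om) : R :=
  inf [set t : R | phi <= emp_cdf_cal ntrain ncal Xs Ys s w t].

Definition conf_set {Om X Y : Type} {R : realType} (ntrain ncal : nat)
  (Xs : nat -> Om -> X) (Ys : nat -> Om -> Y)
  (s : ntrain.+1.-tuple (X * Y) -> R) (phi : R) (w : Om) (x : X) : set Y :=
  [set y | strain s (train_data ntrain Xs Ys w) (x, y)
           <= qhat_cal ntrain ncal Xs Ys s phi w].

(* Main.v *)
Require Import Defs.
From HB Require Import structures.
From mathcomp Require Import all_boot all_order all_algebra.
From mathcomp Require Import all_classical all_reals all_analysis.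
From mathcomp Require Import measurable_realfun.
From mathcomp Require Import zify ring lra.
Import Order.TTheory GRing.Theory Num.Theory.
Import numFieldNormedType.Exports.
Local Open Scope classical_set_scope.
Local Open Scope ring_scope.

Section qinf.
Context {R : realType}.
Definition qinf (f : R -> R) (c : R) := inf [set r | c <= f r].

Context (f : R -> R) (c : R) (mf : {homo f : x y / x <= y}) (r0 r1 : R)
  (h0 : f r0 < c) (h1 : c <= f r1).

Let lbE : lbound [set r | c <= f r] r0.
Proof.
move=> e /= ce; rewrite leNgt; apply/negP => er0.
by move: (lt_le_trans h0 ce); rewrite ltNge mf// ltW.
Qed.

Let neE : [set r | c <= f r] !=set0.
Proof. by exists r1. Qed.

Lemma qinf_le x : c <= f x -> qinf f c <= x.
Proof. by move=> cx; apply: ge_inf => //; exists r0; exact: lbE. Qed.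

Lemma lt_qinf x : x < qinf f c -> f x < c.
Proof.
move=> xq; rewrite ltNge; apply/negP => cx.
by move: (qinf_le x cx); rewrite leNgt xq.
Qed.

Lemma qinf_ltP x : qinf f c < x -> exists q : rat, ratr q < x /\ c <= f (ratr q).
Proof.
move=> /(inf_lt neE) [y /= cy yx].
have [q /andP[]] := rat_in_itvoo yx; rewrite !bnd_simp => yq qx.
by exists q; split => //; apply: le_trans cy (mf _ _ (ltW yq)).
Qed.

Lemma qinf_eps e : 0 < e -> c <= f (qinf f c + e).
Proof.
move=> e0; have [y /= cy] : exists2 y, c <= f y & y < qinf f c + e.
  apply: inf_adherent => //; split; [exact: neE|by exists r0; exact: lbE].
by move=> ye; apply: le_trans cy (mf _ _ (ltW ye)).
Qed.

End qinf.
Arguments qinf_le {R f c} mf {r0} h0 {x}.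
Arguments lt_qinf {R f c} mf {r0} h0 {x}.
Arguments qinf_ltP {R f c} mf {r1} h1 {x}.
Arguments qinf_eps {R f c} mf {r0 r1} h0 h1 {e}.

Lemma measurable_qinf {R : realType} d (T : measurableType d) (F : T -> R -> R) (c : R) :
  (forall x, {homo F x : a b / a <= b}) ->
  (forall x, exists r0, F x r0 < c) -> (forall x, exists r1, c <= F x r1) ->
  (forall r, measurable_fun setT (F ^~ r)) ->
  measurable_fun setT (fun x => qinf (F x) c).
Proof.
move=> mon h0 h1 mF.
apply: (measurability _ (RGenInftyO.measurableE R)) => //.
move=> _ [_ [r ->] <-]; rewrite setTI.
have -> : (fun x => qinf (F x) c) @^-1` `]-oo, r[ =
    \bigcup_(q : rat) [set x | ratr q < r /\ c <= F x (ratr q)].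
  apply/seteqP; split => x /=.
  - rewrite in_itv /= => qr.
    have [r0 hr0] := h0 x; have [r1 hr1] := h1 x.
    have [q [qr' cq]] := qinf_ltP (mon x) hr1 qr.
    by exists q.
  - move=> [q _ [qr cq]]; rewrite in_itv /=.
    have [r0 hr0] := h0 x.
    by apply: le_lt_trans qr; exact: (qinf_le (mon x) hr0).
apply: bigcupT_measurable_rat => q.
have [qr|qr] := ltP (ratr q) r.
  rewrite (_ : [set x | _ /\ _] = F ^~ (ratr q) @^-1` `[c, +oo[).
    by rewrite -[X in measurable X]setTI; apply: mF => //; exact: measurable_itv.
  by apply/seteqP; split => x /=; rewrite in_itv /= andbT; [case|]; done.
rewrite (_ : [set x | _ /\ _] = set0) //.
by apply/seteqP; split => x //= -[].
Qed.

Section gen_helpers.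
Context (R : realType).

Lemma cont_le (f : R -> R) x0 c : {for x0, continuous f} ->
  (forall r, r < x0 -> f r < c) -> f x0 <= c.
Proof.
move=> cf hlt; rewrite leNgt; apply/negP => cfx.
have H := cvgr_gt _ cf _ cfx.
have [e /= e0 he] : nbhs_ball x0 (fun t => c < f t) by apply/nbhs_ballP; exact: H.
have hb : ball x0 e (x0 - e / 2).
  rewrite /ball /= opprB addrC subrK ger0_norm; last by lra.
  by lra.
have h := he _ hb.
have h2 := hlt (x0 - e / 2) ltac:(lra).
by move: (lt_trans h h2); rewrite ltxx.
Qed.

Lemma abs_fin (a e : R) (x : \bar R) : (`|a%:E - x| <= e%:E)%E ->
  exists y, x = y%:E /\ `|a - y| <= e.
Proof. by case: x => [y| |] //= h; exists y. Qed.

Lemma mle d (T : measurableType d) (f g : T -> R) :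
  measurable_fun setT f -> measurable_fun setT g -> measurable [set w | f w <= g w].
Proof.
move=> mf mg.
have mt : measurable [set true] by [].
have := measurable_fun_ler mf mg measurableT mt.
by rewrite setTI; congr measurable; apply/seteqP; split => w /=.
Qed.

End gen_helpers.

Section mono_helpers.
Local Open Scope ereal_scope.
Context (R : realType) (d : measure_display) (Om : measurableType d)
  (P : probability Om R).

Lemma mono_cap (F : (set Om)^nat) (x : \bar R) :
  (forall n, measurable (F n)) -> nonincreasing_seq F ->
  (forall n, x <= P (F n)) -> x <= P (\bigcap_n F n).
Proof.
move=> mF niF hx.
have mcap : measurable (\bigcap_n F n) by exact: bigcapT_measurable.
have F0 : P (F 0%N) < +oo.
  by apply: (le_lt_trans (probability_le1 _ (mF 0%N))); rewrite ltry.
have h := nonincreasing_cvg_mu F0 mF mcap niF.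
rewrite -(cvg_lim _ h) //; apply: lime_ge; first by apply/cvg_ex; eexists; exact: h.
by apply: nearW => n /=.
Qed.

Lemma mono_cup (F : (set Om)^nat) (x : \bar R) :
  (forall n, measurable (F n)) -> nondecreasing_seq F ->
  (forall n, P (F n) <= x) -> P (\bigcup_n F n) <= x.
Proof.
move=> mF ndF hx.
have mcup : measurable (\bigcup_n F n) by exact: bigcupT_measurable.
have h := nondecreasing_cvg_mu (mu:=P) mF mcup ndF.
rewrite -(cvg_lim _ h) //; apply: lime_le; first by apply/cvg_ex; eexists; exact: h.
by apply: nearW => n /=.
Qed.
End mono_helpers.

Section meas.
Context (R : realType) (d : measure_display) (Om : measurableType d)
  (P : probability Om R) (dX dY : measure_display)
  (X : measurableType dX) (Y : measurableType dY)
  (ntrain ncal ntest : nat)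
  (Xs : nat -> Om -> X) (Ys : nat -> Om -> Y) (XS : Om -> X) (YS : Om -> Y)
  (mXs : forall i, (1 <= i <= ntrain + ncal + ntest)%N ->
           measurable_fun setT (Xs i))
  (mYs : forall i, (1 <= i <= ntrain + ncal + ntest)%N ->
           measurable_fun setT (Ys i))
  (mXS : measurable_fun setT XS) (mYS : measurable_fun setT YS)
  (s : ntrain.+1.-tuple (X * Y) -> R) (ms : measurable_fun setT s).

Local Notation T := (ntrain.-tuple (X * Y)).
Local Notation tr := (train_data ntrain Xs Ys).

Lemma mtr : measurable_fun setT tr.
Proof.
apply/measurable_fun_tnthP => j /=.
rewrite (_ : _ \o _ = fun w => (Xs j.+1 w, Ys j.+1 w)); last first.
  by apply/funext => w /=; rewrite /train_data /sample tnth_mktuple.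
have hj : (1 <= j.+1 <= ntrain + ncal + ntest)%N.
  by rewrite /= -(addnA ntrain) (leq_trans (ltn_ord j)) ?leq_addr.
exact: measurable_fun_pair (mXs _ hj) (mYs _ hj).
Qed.

Definition Sf (p : T * (X * Y)) : R := strain s p.1 p.2.

Lemma mSf : measurable_fun setT Sf.
Proof.
apply: measurableT_comp ms _.
apply/measurable_fun_tnthP => j /=.
have [jn|jn] := ltnP j ntrain.
  rewrite (_ : _ \o _ = (fun t : T => tnth t (Ordinal jn)) \o fst).
    by apply: measurableT_comp => //; exact: measurable_tnth.
  apply/funext => p /=; rewrite /tnth /= nth_rcons size_tuple jn.
  by apply: set_nth_default; rewrite size_tuple.
rewrite (_ : _ \o _ = snd) //.
apply/funext => p /=; rewrite /tnth /= nth_rcons size_tuple ltnNge jn /=.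
by have := ltn_ord j; rewrite ltnS => jn'; rewrite (eqP _ : j == ntrain :> nat) ?eqn_leq ?jn ?jn'.
Qed.

Definition Zf w := (XS w, YS w).
Lemma mZf : measurable_fun setT Zf.
Proof. exact: measurable_fun_pair. Qed.
HB.instance Definition _ := isMeasurableFun.Build _ _ _ _ Zf mZf.

Definition Gf (g : T -> R) (t : T) : \bar R :=
  P (Zf @^-1` [set z | strain s t z <= g t]).

Lemma mGf {g} : measurable_fun setT g -> measurable_fun setT (Gf g).
Proof.
move=> mg.
pose A := [set p : T * (X * Y) | Sf p <= g p.1].
have mA : measurable A.
  rewrite (_ : A = (fun p => Sf p - g p.1) @^-1` `]-oo, 0]).
    rewrite -[X in measurable X]setTI; apply: measurable_funB => //.
      exact: mSf.
    exact: measurableT_comp mg _.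
  by apply/seteqP; split => p; rewrite /A /= in_itv /= subr_le0.
have := measurable_fun_xsection (distribution P Zf) mA.
apply: eq_measurable_fun => t _ /=.
by rewrite /Gf /distribution /pushforward xsectionE.
Qed.

Local Open Scope ereal_scope.
Definition Ev (t : T) (r : R) := Zf @^-1` [set z | (strain s t z <= r)%R].

Lemma mEv t r : measurable (Ev t r).
Proof.
rewrite /Ev -[X in measurable X]setTI; apply: mZf => //.
rewrite (_ : [set z | _] = (fun z => strain s t z) @^-1` `]-oo, r]).
  rewrite -[X in measurable X]setTI.
  have mz : measurable_fun setT (fun z => Sf (t, z)).
    exact: measurableT_comp mSf (pair1_measurable t).
  exact: mz.
by apply/seteqP; split => z; rewrite /= in_itv.
Qed.

Lemma Ev_mono t : {homo Ev t : a b / (a <= b)%R >-> a `<=` b}.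
Proof. by move=> a b ab w /= h; apply: le_trans h ab. Qed.

Definition Hf t r : R := fine (P (Ev t r)).

Lemma HfE t r : P (Ev t r) = (Hf t r)%:E.
Proof.
rewrite /Hf fineK// ge0_fin_numE ?measure_ge0//.
by apply: (le_lt_trans (probability_le1 _ (mEv t r))); rewrite ltry.
Qed.

Lemma Hf_mono t : {homo Hf t : a b / (a <= b)%R}.
Proof.
move=> a b ab; rewrite -lee_fin -!HfE.
by apply: le_measure; rewrite ?inE; [exact: mEv|exact: mEv|exact: Ev_mono].
Qed.

Lemma Hf_low t (c : R) : (0 < c)%R -> exists r0, (Hf t r0 < c)%R.
Proof.
move=> c0; apply/not_existsP => hall.
pose F n := Ev t (- n%:R)%R.
have niF : nonincreasing_seq F.
  by move=> m n mn; apply/subsetPset; apply: Ev_mono; rewrite lerN2 ler_nat.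
have hcap : \bigcap_n F n = set0.
  apply/seteqP; split => // w /= hw.
  have := hw (Num.bound `|strain s t (Zf w)|)%N I.
  rewrite /F /Ev /= lerNr => h.
  have h1 : (- strain s t (Zf w) <= `|strain s t (Zf w)|)%R.
    by rewrite -normrN ler_norm.
  by have := le_lt_trans (le_trans h h1) (archi_boundP (normr_ge0 _)); rewrite ltxx.
have H := @mono_cap _ _ _ P F c%:E (fun n => mEv t _) niF.
have : (c%:E <= P set0)%E.
  rewrite -hcap; apply: H => n.
  by rewrite /F HfE lee_fin; have := hall (- n%:R)%R; rewrite ltNge => /negP/negbNE.
by rewrite measure0 lee_fin leNgt c0.
Qed.

Lemma Hf_high t (c : R) : (c < 1)%R -> exists r1, (c <= Hf t r1)%R.
Proof.
move=> c1; apply/not_existsP => hall.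
pose F n := Ev t (n%:R)%R.
have ndF : nondecreasing_seq F.
  by move=> m n mn; apply/subsetPset; apply: Ev_mono; rewrite ler_nat.
have hcup : \bigcup_n F n = setT.
  apply/seteqP; split => // w _ /=.
  exists (Num.bound `|strain s t (Zf w)|)%N => //.
  rewrite /F /Ev /=; apply: le_trans (ler_norm _) (ltW (archi_boundP (normr_ge0 _))).
have H := @mono_cup _ _ _ P F c%:E (fun n => mEv t _) ndF.
have : (P setT <= c%:E)%E.
  rewrite -hcup; apply: H => n.
  by rewrite /F HfE lee_fin; have := hall (n%:R)%R; rewrite leNgt => /negP/negbNE/ltW.
by rewrite probability_setT lee_fin leNgt c1.
Qed.

Lemma Hf_rcont t (c x : R) : (forall e, 0 < e -> c <= Hf t (x + e))%R -> (c <= Hf t x)%R.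
Proof.
move=> he.
pose F n := Ev t (x + n.+1%:R^-1)%R.
have niF : nonincreasing_seq F.
  move=> m n mn; apply/subsetPset; apply: Ev_mono; rewrite lerD2l.
  by rewrite lef_pV2 ?posrE// ler_nat.
have hcap : \bigcap_n F n = Ev t x.
  apply/seteqP; split => w /=; last first.
    by move=> h n _; rewrite /F /Ev /=; apply: le_trans h _; rewrite lerDl.
  move=> hw; rewrite /Ev /=; rewrite leNgt; apply/negP => /ltr_add_invr [k hk].
  by have := hw k I; rewrite /F /Ev /= leNgt hk.
have := @mono_cap _ _ _ P F c%:E (fun n => mEv t _) niF.
rewrite hcap HfE lee_fin; apply => n.
by rewrite /F HfE lee_fin; apply: he.
Qed.

Local Close Scope ereal_scope.
Lemma mSi {j} : (1 <= j <= ntrain + ncal + ntest)%N ->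
  measurable_fun setT (fun w => strain s (tr w) (Xs j w, Ys j w)).
Proof.
move=> hj.
have -> : (fun w => strain s (tr w) (Xs j w, Ys j w)) =
   Sf \o (fun w => (tr w, (Xs j w, Ys j w))) by [].
apply: measurableT_comp mSf _.
apply: measurable_fun_pair; first exact: mtr.
exact: measurable_fun_pair (mXs _ hj) (mYs _ hj).
Qed.

Lemma mHg {g : T -> R} : measurable_fun setT g ->
  measurable_fun setT (fun t => Hf t (g t)).
Proof.
move=> mg; have -> : (fun t => Hf t (g t)) = fine \o Gf g by [].
exact: measurableT_comp (fine_measurable measurableT) (mGf mg).
Qed.

Lemma mPq {q : T -> R} : measurable_fun setT q ->
  measurable_fun setT (Pq_train P ntrain Xs Ys XS YS s q).
Proof.
move=> mq.
have -> : Pq_train P ntrain Xs Ys XS YS s q = (fun t => Hf t (q t)) \o tr by [].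
exact: measurableT_comp (mHg mq) mtr.
Qed.

Lemma mqstar (c : R) : (0 < c < 1)%R -> measurable_fun setT (fun t => qinf (Hf t) c).
Proof.
case/andP => c0 c1; apply: measurable_qinf.
- exact: Hf_mono.
- by move=> t; exact: Hf_low.
- by move=> t; exact: Hf_high.
- by move=> r; exact: (mHg (measurable_cst r)).
Qed.

Local Notation emp := (emp_cdf_cal ntrain ncal Xs Ys s).

Lemma emp_mono w : {homo emp w : a b / (a <= b)%R}.
Proof.
move=> a b ab; rewrite /emp_cdf_cal ler_wpM2l ?invr_ge0//.
apply: ler_sum => i _; case: (boolP (_ <= a)%R) => h.
  by rewrite (le_trans h ab).
by rewrite ler_nat.
Qed.

Lemma empE w t : emp w t = (ncal%:R^-1 * \sum_(i < ncal)
   (nat_of_bool (strain s (tr w) (Xs (i + ntrain.+1)%N w, Ys (i + ntrain.+1)%N w) <= t))%:R)%R.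
Proof.
rewrite /emp_cdf_cal; congr (_ * _)%R.
rewrite (_ : (ntrain + ncal).+1 = ncal + ntrain.+1)%N; last by rewrite addnS addnC.
by rewrite -{1}(add0n ntrain.+1) big_addn addnK big_mkord.
Qed.

Lemma memp {g : Om -> R} : measurable_fun setT g ->
  measurable_fun setT (fun w => emp w (g w)).
Proof.
move=> mg.
have -> : (fun w => emp w (g w)) = (fun w => (ncal%:R^-1 * \sum_(i < ncal)
   (nat_of_bool (strain s (tr w) (Xs (i + ntrain.+1)%N w, Ys (i + ntrain.+1)%N w) <= g w))%:R)%R).
  by apply/funext => w; rewrite empE.
apply: measurable_funM; first exact: measurable_cst.
apply: measurable_sum => i.
have -> : (fun w => (nat_of_bool (strain s (tr w) (Xs (i + ntrain.+1)%N w, Ys (i + ntrain.+1)%N w) <= g w))%:R : R) =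
   (fun w => if (strain s (tr w) (Xs (i + ntrain.+1)%N w, Ys (i + ntrain.+1)%N w) <= g w)%R then 1%R else 0%R).
  by apply/funext => w; case: ifP.
have hj : (1 <= i + ntrain.+1 <= ntrain + ncal + ntest)%N.
  by have := ltn_ord i; lia.
apply: measurable_fun_ifT; last 2 first.
- exact: measurable_cst.
- exact: measurable_cst.
exact: measurable_fun_ler (mSi hj) mg.
Qed.

Lemma ub_fin (f : nat -> R) b : exists M, forall i, (i < b)%N -> (`|f i| <= M)%R.
Proof.
elim: b => [|b [M hM]]; first by exists 0%R.
exists (Num.max M `|f b|) => i; rewrite ltnS leq_eqVlt => /orP[/eqP ->|ib].
  by rewrite le_max lexx orbT.
by rewrite le_max hM.
Qed.

Lemma emp_low w (c : R) : (0 < c)%R -> exists r0, (emp w r0 < c)%R.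
Proof.
move=> c0.
have [M hM] := ub_fin (fun i => strain s (tr w) (Xs (i + ntrain.+1)%N w, Ys (i + ntrain.+1)%N w)) ncal.
exists (- M - 1)%R; rewrite empE big1 ?mulr0// => i _.
case: (boolP (_ <= - M - 1)%R) => //= h; exfalso.
move: (hM i (ltn_ord i)); rewrite ler_norml => /andP[h1 _].
by have := le_trans h1 h; lra.
Qed.

Lemma emp_high w (c : R) : (0 < ncal)%N -> (c <= 1)%R -> exists r1, (c <= emp w r1)%R.
Proof.
move=> n0 c1.
have [M hM] := ub_fin (fun i => strain s (tr w) (Xs (i + ntrain.+1)%N w, Ys (i + ntrain.+1)%N w)) ncal.
exists M; rewrite empE (eq_bigr (fun _ => 1%R)).
  by rewrite sumr_const card_ord mulVf ?pnatr_eq0 -?lt0n.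
move=> i _; have := hM i (ltn_ord i); rewrite ler_norml => /andP[_ h].
by rewrite h.
Qed.

Local Notation Pq := (Pq_train P ntrain Xs Ys XS YS s).
Local Notation qhat := (qhat_cal ntrain ncal Xs Ys s).

Lemma Pfin {A : set Om} : measurable A -> P A = (fine (P A))%:E.
Proof.
move=> mA; rewrite fineK// ge0_fin_numE ?measure_ge0//.
by apply: (le_lt_trans (probability_le1 _ mA)); rewrite ltry.
Qed.

Lemma mqhat (alpha : R) : 0 < alpha < 1 -> (0 < ncal)%N ->
  measurable_fun setT (qhat (1 - alpha)).
Proof.
case/andP => a0 a1 n0.
rewrite (_ : qhat (1 - alpha) = fun w => qinf (emp w) (1 - alpha)) //.
apply: measurable_qinf.
- exact: emp_mono.
- by move=> w; apply: emp_low; lra.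
- by move=> w; apply: emp_high => //; lra.
- by move=> r; exact: (memp (measurable_cst r)).
Qed.

Lemma Hf_ge0 t r : 0 <= Hf t r.
Proof. exact/fine_ge0/measure_ge0. Qed.

Lemma part1 (alpha eps delta epst : R) (hncal : (0 < ncal)%N)
  (halpha : 0 < alpha < 1) (heps : 0 < eps) (hdelta : 0 < delta)
  (hcal : forall q : T -> R, measurable_fun setT q ->
     ((1 - delta)%:E <=
      P [set w | (`| emp w (q (tr w)) - Pq q w | <= eps)%R])%E)
  (htest : forall q : T -> R, measurable_fun setT q ->
     forall i, in_Itest ntrain ncal ntest i ->
     (`| P [set w | (strain s (tr w) (Xs i w, Ys i w) <= q (tr w))%R]
         - 'E_P[Pq q] | <= epst%:E)%E)
  i (hi : in_Itest ntrain ncal ntest i) :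
  ((1 - alpha - eps - delta - epst)%:E <=
     P [set w | (strain s (tr w) (Xs i w, Ys i w) <= qhat (1 - alpha) w)%R])%E.
Proof.
have hi' : (1 <= i <= ntrain + ncal + ntest)%N by move: hi; rewrite /in_Itest; lia.
pose Si := fun w => strain s (tr w) (Xs i w, Ys i w).
have mSi' : measurable_fun setT Si := mSi hi'.
have epst0 : 0 <= epst.
  have := htest (fun _ => 0%R) (measurable_cst (0%R : R)) i hi.
  by move/(le_trans (abse_ge0 _)); rewrite lee_fin.
case/andP: halpha => a0 a1.
pose c := 1 - alpha - eps.
have [c0|c0] := leP c 0.
  by apply: le_trans (measure_ge0 _ _); rewrite lee_fin; rewrite /c in c0; lra.
have c1 : c < 1 by rewrite /c; lra.
pose q := fun t => qinf (Hf t) c.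
have mq : measurable_fun setT q by apply: mqstar; rewrite c0 c1.
have Hq t : c <= Hf t (q t).
  have [r0 h0] := Hf_low t c c0; have [r1 h1] := Hf_high t c c1.
  apply: Hf_rcont => e e0.
  exact: (qinf_eps (Hf_mono t) h0 h1 e0).
have Hlt t r : r < q t -> Hf t r < c.
  have [r0 h0] := Hf_low t c c0.
  exact: (lt_qinf (Hf_mono t) h0).
pose A := [set w | Si w <= q (tr w)].
have mA : measurable A by apply: mle mSi' (measurableT_comp mq mtr).
pose Cov := [set w | Si w <= qhat (1 - alpha) w].
have mCov : measurable Cov.
  have mqh := mqhat alpha ltac:(by rewrite a0 a1) hncal.
  exact: mle mSi' mqh.
pose qk k t := q t - k.+1%:R^-1.
have mqk k : measurable_fun setT (qk k).
  exact: measurable_funB mq (measurable_cst _).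
pose B k := [set w | 1 - alpha <= emp w (qk k (tr w))].
have mB k : measurable (B k).
  exact: mle (measurable_cst _) (memp (measurableT_comp (mqk k) mtr)).
pose Good k := [set w | `|emp w (qk k (tr w)) - Pq (qk k) w| <= eps].
have mGood k : measurable (Good k).
  apply: mle; last exact: measurable_cst.
  have -> : (fun w => `|emp w (qk k (tr w)) - Pq (qk k) w|) =
    Num.norm \o (fun w => emp w (qk k (tr w)) - Pq (qk k) w) by [].
  apply: measurableT_comp; first exact: normr_measurable.
  exact: measurable_funB (memp (measurableT_comp (mqk k) mtr)) (mPq (mqk k)).
have hB k : (P (B k) <= delta%:E)%E.
  have sub : B k `<=` ~` Good k.
    move=> w Bw Gw; move: Bw Gw; rewrite /B /Good /=.
    have := Hlt (tr w) (qk k (tr w)).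
    have : qk k (tr w) < q (tr w) by rewrite /qk ltrBlDr ltrDl invr_gt0.
    move=> h1 /(_ h1) h2 h3; rewrite ler_norml => /andP[_ h4].
    rewrite /c in h2.
    have : Pq (qk k) w = Hf (tr w) (qk k (tr w)) by [].
    move=> h5; rewrite h5 in h4; lra.
  have hle := @le_measure _ _ _ P _ _ (mem_set (mB k)) (mem_set (measurableC (mGood k))) sub.
  apply: le_trans hle _.
  have hC : P (~` Good k) = (1 - P (Good k))%E by exact: probability_setC.
  change (P (~` Good k) <= delta%:E)%E.
  rewrite hC (Pfin (mGood k)) -EFinB lee_fin.
  by have := hcal _ (mqk k); rewrite (Pfin (mGood k)) lee_fin; lra.
have ndB : nondecreasing_seq B.
  move=> m n mn; apply/subsetPset => w; rewrite /B /= => h.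
  apply: (le_trans h); apply: emp_mono; rewrite /qk lerD2l lerN2.
  by rewrite lef_pV2 ?posrE// ler_nat.
have hBad := @mono_cup _ _ _ P B delta%:E mB ndB hB.
have mBad : measurable (\bigcup_k B k) by exact: bigcupT_measurable.
have hsub : A `<=` Cov `|` \bigcup_k B k.
  move=> w Aw; case: (pselect ((\bigcup_k B k) w)) => [hb|hb]; [by right|left].
  rewrite /Cov /=; apply: le_trans Aw _.
  apply: lb_le_inf.
    have [r1 h1] := emp_high w (1 - alpha) hncal ltac:(lra).
    by exists r1.
  move=> t ht; rewrite leNgt; apply/negP => tq.
  have [k hk] := ltr_add_invr tq.
  apply: hb; exists k => //; rewrite /B /=.
  apply: (le_trans ht); apply: emp_mono; rewrite /qk lerBrDr; exact: ltW.
have hPA : (P A <= P Cov + P (\bigcup_k B k))%E.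
  apply: le_trans (measureU2 _ mCov mBad).
  have hle := @le_measure _ _ _ P _ _ (mem_set mA) (mem_set (measurableU _ _ mCov mBad)) hsub.
  exact: hle.
have hA : ((c - epst)%:E <= P A)%E.
  have hE : (c%:E <= 'E_P[Pq q])%E.
    rewrite -(@expectation_cst _ _ _ P c); apply: expectation_le.
    - exact: measurable_cst.
    - exact: mPq mq.
    - by move=> ?; exact: ltW.
    - by move=> w; exact: Hf_ge0.
    - by apply: aeW => w; exact: Hq.
  have := htest _ mq i hi; rewrite (Pfin mA) => /abs_fin [y [hy hay]].
  rewrite hy lee_fin in hE; rewrite lee_fin.
  by move: hay; rewrite ler_norml => /andP[h1 h2]; lra.
rewrite (Pfin mCov) lee_fin.
move: hPA hBad hA; rewrite (Pfin mCov) (Pfin mBad) (Pfin mA) -EFinD !lee_fin.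
by rewrite /c; lra.
Qed.

Lemma part2 (alpha eps delta epst : R) (hncal : (0 < ncal)%N)
  (halpha : 0 < alpha < 1) (heps : 0 < eps) (hdelta : 0 < delta)
  (hcal : forall q : T -> R, measurable_fun setT q ->
     ((1 - delta)%:E <=
      P [set w | (`| emp w (q (tr w)) - Pq q w | <= eps)%R])%E)
  (htest : forall q : T -> R, measurable_fun setT q ->
     forall i, in_Itest ntrain ncal ntest i ->
     (`| P [set w | (strain s (tr w) (Xs i w, Ys i w) <= q (tr w))%R]
         - 'E_P[Pq q] | <= epst%:E)%E)
  (hcont : {ae P, forall w, continuous (cond_cdf P ntrain Xs Ys XS YS s w)})
  i (hi : in_Itest ntrain ncal ntest i) :
  (P [set w | (strain s (tr w) (Xs i w, Ys i w) <= qhat (1 - alpha) w)%R]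
     <= (1 - alpha + eps + delta + epst)%:E)%E.
Proof.
have hi' : (1 <= i <= ntrain + ncal + ntest)%N by move: hi; rewrite /in_Itest; lia.
pose Si := fun w => strain s (tr w) (Xs i w, Ys i w).
have mSi' : measurable_fun setT Si := mSi hi'.
have epst0 : 0 <= epst.
  have := htest (fun _ => 0%R) (measurable_cst (0%R : R)) i hi.
  by move/(le_trans (abse_ge0 _)); rewrite lee_fin.
case/andP: halpha => a0 a1.
pose Cov := [set w | Si w <= qhat (1 - alpha) w].
have mCov : measurable Cov.
  have mqh := mqhat alpha ltac:(by rewrite a0 a1) hncal.
  exact: mle mSi' mqh.
pose c := 1 - alpha + eps.
have [c1|c1] := leP 1 c.
  apply: le_trans (probability_le1 _ mCov) _.
  by rewrite lee_fin; rewrite /c in c1; lra.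
have c0 : 0 < c by rewrite /c; lra.
pose q := fun t => qinf (Hf t) c.
have mq : measurable_fun setT q by apply: mqstar; rewrite c0 c1.
have Hq t : c <= Hf t (q t).
  have [r0 h0] := Hf_low t c c0; have [r1 h1] := Hf_high t c c1.
  apply: Hf_rcont => e e0.
  exact: (qinf_eps (Hf_mono t) h0 h1 e0).
have Hlt t r : r < q t -> Hf t r < c.
  have [r0 h0] := Hf_low t c c0.
  exact: (lt_qinf (Hf_mono t) h0).
pose A := [set w | Si w <= q (tr w)].
have mA : measurable A by apply: mle mSi' (measurableT_comp mq mtr).
pose Good := [set w | `|emp w (q (tr w)) - Pq q w| <= eps].
have mGood : measurable Good.
  apply: mle; last exact: measurable_cst.
  have -> : (fun w => `|emp w (q (tr w)) - Pq q w|) =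
    Num.norm \o (fun w => emp w (q (tr w)) - Pq q w) by [].
  apply: measurableT_comp; first exact: normr_measurable.
  exact: measurable_funB (memp (measurableT_comp mq mtr)) (mPq mq).
have hsub : Cov `<=` A `|` ~` Good.
  move=> w Cw; case: (pselect (Good w)) => [g|g]; [left|by right].
  rewrite /A /=; apply: le_trans Cw _.
  change (qinf (emp w) (1 - alpha) <= q (tr w)).
  have [r0 h0] := emp_low w (1 - alpha) ltac:(lra).
  apply: (qinf_le (emp_mono w) h0).
  move: g; rewrite /Good /= ler_norml => /andP[h1 _].
  have := Hq (tr w).
  have : Pq q w = Hf (tr w) (q (tr w)) by [].
  by move=> h5 h6; rewrite h5 in h1; rewrite /c in h6; lra.
have mnG : measurable (~` Good) by exact: measurableC.
have hPC : (P Cov <= P A + P (~` Good))%E.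
  apply: le_trans (measureU2 _ mA mnG).
  have hle := @le_measure _ _ _ P _ _ (mem_set mCov) (mem_set (measurableU _ _ mA mnG)) hsub.
  exact: hle.
have hG : (P (~` Good) <= delta%:E)%E.
  have hC : P (~` Good) = (1 - P Good)%E by exact: probability_setC.
  rewrite hC (Pfin mGood) -EFinB lee_fin.
  by have := hcal _ mq; rewrite (Pfin mGood) lee_fin; lra.
have hA : (P A <= (c + epst)%:E)%E.
  have hE : ('E_P[Pq q] <= c%:E)%E.
    rewrite -(@expectation_cst _ _ _ P c); apply: expectation_le.
    - exact: mPq mq.
    - exact: measurable_cst.
    - by move=> w; exact: Hf_ge0.
    - by move=> ?; exact: ltW.
    - apply: filterS hcont => w hw.
      change (cond_cdf P ntrain Xs Ys XS YS s w (q (tr w)) <= c).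
      have := @cont_le R (cond_cdf P ntrain Xs Ys XS YS s w) (q (tr w)) c (hw (q (tr w))).
      by apply => r hr; exact: (Hlt (tr w) r hr).
  have := htest _ mq i hi; rewrite (Pfin mA) => /abs_fin [y [hy hay]].
  rewrite hy lee_fin in hE; rewrite lee_fin.
  by move: hay; rewrite ler_norml => /andP[h1 h2]; lra.
move: hPC hG hA; rewrite (Pfin mCov) (Pfin mnG) (Pfin mA) -EFinD !lee_fin.
by rewrite /c; lra.
Qed.

End meas.

Theorem theorem2p1 (R : realType) (d : measure_display) (Om : measurableType d)
  (P : probability Om R) (dX dY : measure_display)
  (X : measurableType dX) (Y : measurableType dY)
  (ntrain ncal ntest : nat)
  (hntrain : (0 < ntrain)%N) (hncal : (0 < ncal)%N) (hntest : (0 < ntest)%N)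
  (Xs : nat -> Om -> X) (Ys : nat -> Om -> Y) (XS : Om -> X) (YS : Om -> Y)
  (mXs : forall i, (1 <= i <= ntrain + ncal + ntest)%N ->
           measurable_fun setT (Xs i))
  (mYs : forall i, (1 <= i <= ntrain + ncal + ntest)%N ->
           measurable_fun setT (Ys i))
  (mXS : measurable_fun setT XS) (mYS : measurable_fun setT YS)
  (hlaw : forall i, (1 <= i <= ntrain + ncal + ntest)%N ->
     same_law P (fun w => (Xs i w, Ys i w)) (fun w => (XS w, YS w)))
  (hindep : indep_rv P (sample (ntrain + ncal + ntest) Xs Ys)
                       (fun w => (XS w, YS w)))
  (s : ntrain.+1.-tuple (X * Y) -> R) (ms : measurable_fun setT s)
  (alpha : R) (halpha : 0 < alpha < 1)
  (eps_cal delta_cal eps_test : R)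
  (heps_cal : 0 < eps_cal < 1) (hdelta_cal : 0 < delta_cal < 1)
  (hcal : forall q : ntrain.-tuple (X * Y) -> R, measurable_fun setT q ->
     ((1 - delta_cal)%:E <=
      P [set w | (`| emp_cdf_cal ntrain ncal Xs Ys s w
                      (q (train_data ntrain Xs Ys w))
                    - Pq_train P ntrain Xs Ys XS YS s q w | <= eps_cal)%R])%E)
  (htest : forall q : ntrain.-tuple (X * Y) -> R, measurable_fun setT q ->
     forall i, in_Itest ntrain ncal ntest i ->
     (`| P [set w | (strain s (train_data ntrain Xs Ys w) (Xs i w, Ys i w)
                      <= q (train_data ntrain Xs Ys w))%R]
         - 'E_P[Pq_train P ntrain Xs Ys XS YS s q] | <= eps_test%:E)%E) :
  (forall i, in_Itest ntrain ncal ntest i ->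
     ((1 - alpha - eps_cal - delta_cal - eps_test)%:E <=
      P [set w | conf_set ntrain ncal Xs Ys s (1 - alpha) w (Xs i w) (Ys i w)])%E)
  /\
  ({ae P, forall w, continuous (cond_cdf P ntrain Xs Ys XS YS s w)} ->
   forall i, in_Itest ntrain ncal ntest i ->
     (`| P [set w | conf_set ntrain ncal Xs Ys s (1 - alpha) w (Xs i w) (Ys i w)]
         - (1 - alpha)%:E | <= (eps_cal + delta_cal + eps_test)%:E)%E).

Proof.
split.
  move=> i hi.
  change ((1 - alpha - eps_cal - delta_cal - eps_test)%:E <=
     P [set w | (strain s (train_data ntrain Xs Ys w) (Xs i w, Ys i w)
       <= qhat_cal ntrain ncal Xs Ys s (1 - alpha) w)%R])%E.
  have h := (part1 _ _ _ P _ _ _ _ ntrain ncal ntest Xs Ys XS YS mXs mYs mXS mYS s ms alpha eps_cal delta_cal eps_test hncal halpha (proj1 (andP heps_cal))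
    (proj1 (andP hdelta_cal)) hcal htest i hi).
  exact: h.
move=> hcont i hi.
have h1 := part1 _ _ _ P _ _ _ _ ntrain ncal ntest Xs Ys XS YS mXs mYs mXS mYS s ms alpha eps_cal delta_cal eps_test hncal halpha (proj1 (andP heps_cal))
    (proj1 (andP hdelta_cal)) hcal htest i hi.
have h2 := part2 _ _ _ P _ _ _ _ ntrain ncal ntest Xs Ys XS YS mXs mYs mXS mYS s ms alpha eps_cal delta_cal eps_test hncal halpha (proj1 (andP heps_cal))
    (proj1 (andP hdelta_cal)) hcal htest hcont i hi.
change (`|P [set w | (strain s (train_data ntrain Xs Ys w) (Xs i w, Ys i w)
   <= qhat_cal ntrain ncal Xs Ys s (1 - alpha) w)%R] - (1 - alpha)%:E|
   <= (eps_cal + delta_cal + eps_test)%:E)%E.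
move: h1 h2; case: (P _) => [x| |] //= h1 h2.
rewrite lee_fin ler_norml.
move: h1 h2; rewrite !lee_fin => h1 h2.
apply/andP; split; lra.
Qed.
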